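(* Let $C$ and $C'$ be configurations of 2REG, let $v\in C$, and let $t\ge 0$ be an integer with $\mathrm{d}_C((0,0),v)\le t$. Then $C\equiv'_{t,v}C'$ if and only if both of the following hold: (1) $C'$ is a consistent extension of the subset $M(v,t,C)$ of $C$; and (2) $M(v,t,C')\setminus M(v,t,C)=\emptyset$.
   Context: Positions are elements of $\mathbb{Z}^2$. Put $\epsilon_0=(1,0)$, $\epsilon_1=(0,1)$, $\epsilon_2=(-1,0)$, $\epsilon_3=(0,-1)$. Two positions $p,p'$ are adjacent if $p'-p\in\{\epsilon_0,\epsilon_1,\epsilon_2,\epsilon_3\}$. A path is a nonempty sequence of positions in which consecutive positions are adjacent; a set of positions $C$ is connected if any two of its elements are joined by a path inside $C$. A configuration of 2REG is a finite connected set $C\subseteq\mathbb{Z}^2$ containing the origin $(0,0)$ (the position of the general). For $p,p'\in C$, $\mathrm{d}_C(p,p')$ is the number of steps of a shortest path from $p$ to $p'$ inside $C$. For $p\in C$, the boundary condition $\mathrm{bc}_C(p)=(b_0,b_1,b_2,b_3)\in\{0,1\}^4$ has $b_i=1$ iff $p+\epsilon_i\in C$. Available information: for a configuration $C$, $v\in C$ and time $t\ge0$, $\mathrm{ai}(v,t,C)$ is the symbol $\mathrm{Q}$ if $\mathrm{d}_C((0,0),v)>t$, and otherwise the triple $(t,v,X)$ where $X=\{(v',\mathrm{bc}_C(v')) : v'\in C,\ \mathrm{d}_C((0,0),v')+\mathrm{d}_C(v',v)\le t\}$. For configurations $C,C'$, $C\equiv'_{t,v}C'$ means $v\in C\cap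 C'$ and $\mathrm{ai}(v,t,C)=\mathrm{ai}(v,t,C')\ne\mathrm{Q}$. Define $M(v,t,C)=\{v'\in C : \mathrm{d}_C((0,0),v')+\mathrm{d}_C(v',v)\le t\}$. For a configuration $C$, a subset $M\subseteq C$ and a configuration $C'$, $C'$ is a consistent extension of $M$ (as a subset of $C$) if $M\subseteq C'$ and $\mathrm{bc}_C(w)=\mathrm{bc}_{C'}(w)$ for every $w\in M$. *)

(* Defs.v *)
From HB Require Import structures.
From mathcomp Require Import all_boot all_order all_algebra.
From mathcomp Require Import finmap.
From Stdlib Require Import ClassicalEpsilon.
Set Implicit Arguments. Unset Strict Implicit. Unset Printing Implicit Defensive.
Import GRing.Theory Num.Theory.
Local Open Scope fset_scope.

Definition pos := (int * int)%type.
Definition origin : pos := (0%R, 0%R).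
Definition padd (p q : pos) : pos := (p.1 + q.1, p.2 + q.2)%R.
Definition eps0 : pos := (1%R, 0%R).
Definition eps1 : pos := (0%R, 1%R).
Definition eps2 : pos := ((-1)%R, 0%R).
Definition eps3 : pos := (0%R, (-1)%R).

Definition adjacent (p p' : pos) : bool :=
  [|| p' == padd p eps0, p' == padd p eps1, p' == padd p eps2 | p' == padd p eps3].

(* A path p = x_0, x_1, ..., x_n (n = size s steps) with x :: s, inside C. *)
Definition path_in (C : {fset pos}) (x : pos) (s : seq pos) : bool :=
  path adjacent x s && all (fun y => y \in C) (x :: s).

Definition connected (C : {fset pos}) : Prop :=
  forall p q, p \in C -> q \in C ->
    exists s, path_in C p s /\ last p s = q.

Definition config (C : {fset pos}) : Prop := origin \in C /\ connected C.

Definition is_dist (C : {fset pos}) (p q : pos) (n : nat) : Prop :=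
  (exists s, [/\ path_in C p s, last p s = q & size s = n]) /\
  (forall s, path_in C p s -> last p s = q -> (n <= size s)%N).

(* d_C(p,q); meaningful whenever a path from p to q in C exists. *)
Definition dist (C : {fset pos}) (p q : pos) : nat :=
  epsilon (inhabits 0%N) (is_dist C p q).

Definition bcT := (bool * bool * bool * bool)%type.

Definition bc (C : {fset pos}) (p : pos) : bcT :=
  (padd p eps0 \in C, padd p eps1 \in C, padd p eps2 \in C, padd p eps3 \in C).

Inductive info : Type :=
  | InfoQ : info
  | Info : nat -> pos -> {fset (pos * bcT)} -> info.

Definition ai (v : pos) (t : nat) (C : {fset pos}) : info :=
  if (t < dist C origin v)%N then InfoQ
  else Info t v [fset (v', bc C v') | v' in C & (dist C origin v' + dist C v' v <= t)%N].

Definition equiv' (t : nat) (v : pos) (C C' : {fset pos}) : Prop :=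
  [/\ v \in C, v \in C', ai v t C = ai v t C' & ai v t C <> InfoQ].

Definition M (v : pos) (t : nat) (C : {fset pos}) : {fset pos} :=
  [fset v' in C | (dist C origin v' + dist C v' v <= t)%N].

Definition consistent_extension (C : {fset pos}) (Ms : {fset pos}) (C' : {fset pos}) : Prop :=
  Ms `<=` C' /\ forall w, w \in Ms -> bc C w = bc C' w.

(* Main.v *)
Require Import Defs.
From HB Require Import structures.
From mathcomp Require Import all_boot all_order all_algebra.
From mathcomp Require Import finmap.
From Stdlib Require Import Classical ClassicalEpsilon.
Local Open Scope fset_scope.
Set Implicit Arguments. Unset Strict Implicit.

Lemma path_in_cons C x y s :
  path_in C x (y :: s) = [&& adjacent x y, x \in C & path_in C y s].
Proof.
rewrite /path_in /=; by case: (adjacent x y); case: (x \in C); case: (path _ _ _).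
Qed.

Lemma path_in_cat C x s1 s2 :
  path_in C x (s1 ++ s2) = path_in C x s1 && path_in C (last x s1) s2.
Proof.
elim: s1 x => [|y s1 IH] x /=.
  by rewrite /path_in /=; case: (x \in C); case: (path _ _ _).
by rewrite !path_in_cons IH; case: (adjacent x y); case: (x \in C).
Qed.

Lemma path_in_sub C C' x s :
  path_in C x s -> {subset x :: s <= C'} -> path_in C' x s.
Proof.
rewrite /path_in => /andP[-> _] H; apply/allP => y Hy; exact: H.
Qed.

Lemma path_in_head C x s : path_in C x s -> x \in C.
Proof. by rewrite /path_in => /andP[_ /= /andP[]]. Qed.

Lemma split_path C x s u : path_in C x s -> u \in x :: s ->
  exists s1 s2, [/\ path_in C x s1, last x s1 = u, path_in C u s2,
     last u s2 = last x s & size s1 + size s2 = size s]%N.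
Proof.
elim: s x => [|y s IH] x.
  move=> Hp; rewrite inE => /eqP Hu; rewrite Hu; exists [::], [::]; split=> //.
move=> Hp; rewrite inE; case: eqP => [-> _|_ /= Hu].
  exists [::], (y :: s); split=> //.
  by rewrite /path_in /= (path_in_head Hp).
move: (Hp); rewrite path_in_cons => /and3P[Ha Hx Hy].
have [s1 [s2 [P1 L1 P2 L2 S]]] := IH y Hy Hu.
exists (y :: s1), s2; split=> //=.
  by rewrite path_in_cons Ha Hx P1.
by rewrite addSn S.
Qed.

Lemma is_dist_ex C p q s : path_in C p s -> last p s = q -> exists n, is_dist C p q n.
Proof.
move=> Hp Hl.
suff H : forall N n, (n <= N)%N -> (exists s, [/\ path_in C p s, last p s = q & size s = n]) ->
  exists n, is_dist C p q n.
  by apply: (H (size s) (size s)) => //; exists s.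
elim=> [|N IH] n Hn [s0 [P0 L0 S0]].
  exists n; split; first by exists s0.
  by move=> s' _ _; move: Hn; rewrite leqn0 => /eqP ->.
case: (classic (exists s', [/\ path_in C p s', last p s' = q & (size s' < n)%N])).
  move=> [s' [P' L' S']]; apply: (IH (size s')); last by exists s'.
  by rewrite -ltnS; apply: leq_trans S' Hn.
move=> Hno; exists n; split; first by exists s0.
move=> s' P' L'; rewrite leqNgt; apply/negP => Hlt; apply: Hno; by exists s'.
Qed.

Lemma dist_spec C p q s : path_in C p s -> last p s = q -> is_dist C p q (dist C p q).
Proof.
move=> Hp Hl; rewrite /dist; apply: epsilon_spec; exact: is_dist_ex Hp Hl.
Qed.

Lemma dist_le C p q s : path_in C p s -> last p s = q -> (dist C p q <= size s)%N.
Proof. move=> Hp Hl; have [_ H] := dist_spec Hp Hl; exact: H. Qed.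

Lemma dist_path C p q : connected C -> p \in C -> q \in C ->
  exists s, [/\ path_in C p s, last p s = q & size s = dist C p q].
Proof.
move=> Hc Hp Hq; have [s [Ps Ls]] := Hc p q Hp Hq.
by have [H _] := dist_spec Ps Ls.
Qed.

Lemma dist_refl C v : v \in C -> dist C v v = 0%N.
Proof.
move=> Hv; apply/eqP; rewrite -leqn0.
apply: (@dist_le C v v [::]) => //; by rewrite /path_in /= Hv.
Qed.

Lemma inM v t C w : (w \in M v t C) = (w \in C) && (dist C origin w + dist C w v <= t)%N.
Proof. by rewrite /M inE. Qed.

Lemma inS v t C a :
  (a \in [fset (v', bc C v') | v' in C & (dist C origin v' + dist C v' v <= t)%N]) =
  (a.1 \in M v t C) && (a.2 == bc C a.1).
Proof.
apply/imfsetP/andP => [[x Hx ->]|[H1 /eqP H2]].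
  by move: Hx; rewrite inE /= inM => ->.
exists a.1; first by move: H1; rewrite inM inE.
by case: a H1 H2 => /= ? ? _ ->.
Qed.

Lemma aiE v t C : (dist C origin v <= t)%N ->
  ai v t C = Info t v [fset (v', bc C v') | v' in C & (dist C origin v' + dist C v' v <= t)%N].
Proof. by rewrite /ai ltnNge => ->. Qed.

Unset Implicit Arguments.
Theorem theorem1 (C C' : {fset pos}) (v : pos) (t : nat) :
  config C -> config C' -> v \in C -> (dist C origin v <= t)%N ->
  (equiv' t v C C' <->
   (consistent_extension C (M v t C) C' /\ M v t C' `\` M v t C = fset0)).
Proof.
move=> [HoC HcC] _ HvC Hd; split.
  move=> [_ HvC' Heq _].
  have Hd' : (dist C' origin v <= t)%N.
    rewrite leqNgt; apply/negP => Hlt; move: Heq; rewrite (aiE Hd) /ai Hlt; done.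
  move: Heq; rewrite (aiE Hd) (aiE Hd') => [[Heq]].
  split; [split|].
  - apply/fsubsetP => w Hw.
    have : (w, bc C w) \in [fset (v', bc C v') | v' in C & (dist C origin v' + dist C v' v <= t)%N].
      by rewrite inS /= Hw eqxx.
    by rewrite Heq inS /= => /andP[]; rewrite inM => /andP[].
  - move=> w Hw.
    have : (w, bc C w) \in [fset (v', bc C v') | v' in C & (dist C origin v' + dist C v' v <= t)%N].
      by rewrite inS /= Hw eqxx.
    by rewrite Heq inS /= => /andP[_ /eqP].
  - apply/eqP; rewrite fsetD_eq0; apply/fsubsetP => w Hw.
    have : (w, bc C' w) \in [fset (v', bc C' v') | v' in C' & (dist C' origin v' + dist C' v' v <= t)%N].
      by rewrite inS /= Hw eqxx.
    by rewrite -Heq inS /= => /andP[].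
move=> [[Hsub Hbc] HD].
have HD' : M v t C' `<=` M v t C by rewrite -fsetD_eq0 HD.
have HMM : forall w, w \in M v t C -> w \in M v t C'.
  move=> w Hw; have := Hw; rewrite inM => /andP[HwC Hwt].
  have [s1 [P1 L1 S1]] := dist_path HcC HoC HwC.
  have [s2 [P2 L2 S2]] := dist_path HcC HwC HvC.
  have Pc : path_in C origin (s1 ++ s2) by rewrite path_in_cat P1 L1.
  have Lc : last origin (s1 ++ s2) = v by rewrite last_cat L1.
  have Sub : {subset origin :: (s1 ++ s2) <= C'}.
    move=> u Hu; apply: (fsubsetP Hsub); rewrite inM.
    have [p1 [p2 [Q1 M1 Q2 M2 T]]] := split_path Pc Hu.
    rewrite (path_in_head Q2) /=.
    apply: leq_trans (leq_add (dist_le Q1 M1) (dist_le Q2 (etrans M2 Lc))) _.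
    by rewrite T size_cat S1 S2.
  have Pc' := path_in_sub Pc Sub.
  move: Pc'; rewrite path_in_cat L1 => /andP[P1' P2'].
  rewrite inM (path_in_head P2') /=.
  apply: leq_trans (leq_add (dist_le P1' L1) (dist_le P2' L2)) _.
  by rewrite S1 S2.
have HvM : v \in M v t C by rewrite inM HvC dist_refl // addn0.
have HvC' : v \in C' by apply: (fsubsetP Hsub).
have Hd' : (dist C' origin v <= t)%N.
  by move: (HMM v HvM); rewrite inM => /andP[_]; rewrite (dist_refl HvC') addn0.
split=> //; last by rewrite (aiE Hd).
rewrite (aiE Hd) (aiE Hd'); congr Info; apply/fsetP => a; rewrite !inS.
have HM : M v t C = M v t C'.
  by apply/fsetP => w; apply/idP/idP => [/HMM //|/(fsubsetP HD')].
rewrite -HM; case Ha: (a.1 \in M v t C) => //=; by rewrite Hbc.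
Qed.
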